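(* Let $P\subseteq\mathbb{R}^d$ be a lattice polytope of dimension $d$, and suppose there are Fine core normals $a_0,\dots,a_\ell$ of $P$ and coefficients $\lambda_0,\dots,\lambda_\ell\in\mathbb{R}_{>0}$ such that $\sum_{i=0}^{\ell}\lambda_i a_i=0$. Then there is a lattice polytope $Q$ of dimension at most $\ell$ such that $\mu^F(P)=\mu^F(Q)$.
   Context: For a $d$-dimensional rational polytope $P\subseteq\mathbb{R}^d$ and $a\in(\mathbb{Z}^d)^*$ let $h_P(a)=\min_{x\in P}\langle a,x\rangle$. For $s>0$ the Fine adjoint polytope is $P^{F(s)}=\{x\in\mathbb{R}^d : \langle a,x\rangle\ge h_P(a)+s \text{ for all } a\in(\mathbb{Z}^d)^*\setminus\{0\}\}$. The Fine $\mathbb{Q}$-codegree is $\mu^F(P)=(\sup\{s>0 : P^{F(s)}\neq\emptyset\})^{-1}$, the Fine number is $n^F(P)=1/\mu^F(P)$, and the Fine core is $\operatorname{core}^F(P)=P^{F(n^F(P))}$. A Fine core normal of $P$ is a nonzero $a\in(\mathbb{Z}^d)^*$ with $\langle a,y\rangle=h_P(a)+n^F(P)$ for all $y\in\operatorname{core}^F(P)$. The Fine $\mathbb{Q}$-codegree of a polytope that is a lattice polytope with respect to some lattice $\Lambda$ is defined analogously using $\Lambda$ and its dual lattice in place of $\mathbb{Z}^d$ and $(\mathbb{Z}^d)^*$. *)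

(* Defs.v *)
From HB Require Import structures.
From mathcomp Require Import all_boot all_order all_algebra.
From mathcomp Require Import boolp classical_sets reals.
Set Implicit Arguments. Unset Strict Implicit. Unset Printing Implicit Defensive.
Import Order.TTheory GRing.Theory Num.Theory.
Local Open Scope ring_scope.
Local Open Scope classical_set_scope.

Section Fine.
Variable R : realType.

(* pairing between (R^d)^* and R^d, both represented as row vectors *)
Definition dotp (d : nat) (a x : 'rV[R]_d) : R := \sum_(i < d) a 0 i * x 0 i.

(* points of Z^d (and, via dotp, elements of (Z^d)^* ) *)
Definition lattice_pt (d : nat) (v : 'rV[R]_d) : Prop :=
  forall i, v 0 i \is a Num.int.

Definition conv (d : nat) (S : seq 'rV[R]_d) : set 'rV[R]_d :=
  [set x | exists w : 'I_(size S) -> R,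
     (forall i, 0 <= w i) /\ \sum_i w i = 1 /\ x = \sum_i w i *: S`_(val i)].

(* affine dimension of conv S (S nonempty): rank of the differences S_i - S_0 *)
Definition conv_dim (d : nat) (S : seq 'rV[R]_d) : nat :=
  \rank (\matrix_(i < size S) (S`_i - S`_0)).

Definition full_dim_lattice_polytope (d : nat) (P : set 'rV[R]_d) : Prop :=
  exists S : seq 'rV[R]_d, S != [::] /\ (forall x, x \in S -> lattice_pt x) /\
    P = conv S /\ conv_dim S = d.

Definition hP (d : nat) (P : set 'rV[R]_d) (a : 'rV[R]_d) : R :=
  inf [set dotp a x | x in P].

Definition fine_adjoint (d : nat) (P : set 'rV[R]_d) (s : R) : set 'rV[R]_d :=
  [set x | forall a : 'rV[R]_d, lattice_pt a -> a != 0 -> hP P a + s <= dotp a x].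

Definition fine_number (d : nat) (P : set 'rV[R]_d) : R :=
  sup [set s | 0 < s /\ fine_adjoint P s !=set0].

Definition fine_codegree (d : nat) (P : set 'rV[R]_d) : R := (fine_number P)^-1.

Definition fine_core (d : nat) (P : set 'rV[R]_d) : set 'rV[R]_d :=
  fine_adjoint P (fine_number P).

Definition fine_core_normal (d : nat) (P : set 'rV[R]_d) (a : 'rV[R]_d) : Prop :=
  lattice_pt a /\ a != 0 /\
  forall y, fine_core P y -> dotp a y = hP P a + fine_number P.

End Fine.

(* Main.v *)
Require Import Defs.
From HB Require Import structures.
From mathcomp Require Import all_boot all_order all_algebra.
From mathcomp Require Import boolp classical_sets reals.
From mathcomp Require Import topology normedtype lra.
Import Order.TTheory GRing.Theory Num.Theory.
Import numFieldNormedType.Exports.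
Local Open Scope ring_scope.
Local Open Scope classical_set_scope.
Set Implicit Arguments. Unset Strict Implicit. Unset Printing Implicit Defensive.
Section S.
Variable R : realType.

Lemma dotp_cont d (a : 'rV[R]_d) : continuous (fun x : 'rV[R]_d => dotp a x).
Proof.
rewrite /dotp.
elim: (index_enum _) => [|i s IH] x.
  under eq_fun do rewrite big_nil. exact: cst_continuous.
under eq_fun do rewrite big_cons.
have := @continuousD _ R^o _ (fun x : 'rV[R]_d => a 0 i * x 0 i) (fun x => \sum_(j <- s) a 0 j * x 0 j) x.
apply.
  apply: (@continuousM R 'rV[R]_d (fun=> a 0 i) (fun x => x 0 i)). exact: cst_continuous. exact: coord_continuous.
exact: IH.
Qed.

Lemma dotpE d (a x : 'rV[R]_d) : dotp a x = (x *m a^T) 0 0.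
Proof. by rewrite /dotp !mxE; apply: eq_bigr => i _; rewrite mxE mulrC. Qed.

Lemma dotp_mulmx d k (c : 'rV[R]_k) (B : 'M[R]_(k, d)) x :
  dotp c (x *m B^T) = dotp (c *m B) x.
Proof. by rewrite !dotpE trmx_mul mulmxA. Qed.

Lemma dotp_suml d n (f : 'I_n -> R) (v : 'I_n -> 'rV[R]_d) x :
  dotp (\sum_i f i *: v i) x = \sum_i f i * dotp (v i) x.
Proof.
rewrite /dotp; under eq_bigr do rewrite summxE mulr_suml.
rewrite exchange_big /=; apply: eq_bigr => i _; rewrite mulr_sumr.
by apply: eq_bigr => j _; rewrite mxE mulrA.
Qed.

Lemma dotp_sumr d n (f : 'I_n -> R) (v : 'I_n -> 'rV[R]_d) a :
  dotp a (\sum_i f i *: v i) = \sum_i f i * dotp a (v i).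
Proof.
rewrite /dotp; under eq_bigr do rewrite summxE mulr_sumr.
rewrite exchange_big /=; apply: eq_bigr => i _; rewrite mulr_sumr.
by apply: eq_bigr => j _; rewrite mxE mulrCA.
Qed.

Lemma dotpNl d (a x : 'rV[R]_d) : dotp (- a) x = - dotp a x.
Proof. by rewrite /dotp -sumrN; apply: eq_bigr => i _; rewrite mxE mulNr. Qed.

Lemma dotp0l d (x : 'rV[R]_d) : dotp 0 x = 0.
Proof. by rewrite /dotp big1 // => i _; rewrite mxE mul0r. Qed.

Lemma conv_lb d (S : seq 'rV[R]_d) a : has_lbound [set dotp a x | x in conv S].
Proof.
exists (- \sum_(i < size S) `|dotp a S`_i|).
move=> _ [x [w [w0 [w1 ->]]] <-]; rewrite dotp_sumr.
have -> : - \sum_(i < size S) `|dotp a S`_i| =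
          \sum_i w i * (- \sum_(i < size S) `|dotp a S`_i|).
  by rewrite -mulr_suml w1 mul1r.
apply: ler_sum => i _; apply: (ler_wpM2l (w0 i)).
rewrite lerNl; apply: le_trans (ler_norm _) _; rewrite normrN.
rewrite (bigD1 i) //= lerDl; apply: sumr_ge0 => j _; exact: normr_ge0.
Qed.

Lemma hP_le d (S : seq 'rV[R]_d) a x : conv S x -> hP (conv S) a <= dotp a x.
Proof. by move=> Sx; rewrite /hP; apply: (ge_inf (conv_lb S a)); exists x. Qed.


Lemma adj_mono d (P : set 'rV[R]_d) s s' :
  s <= s' -> fine_adjoint P s' `<=` fine_adjoint P s.
Proof. by move=> ss' x Hx a al a0; apply: le_trans (Hx a al a0); rewrite lerD2l. Qed.

Lemma adj_closed d (P : set 'rV[R]_d) s : closed (fine_adjoint P s).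
Proof.
have -> : fine_adjoint P s = \bigcap_(a in [set a | lattice_pt a /\ a != 0])
    ((fun x => dotp a x) @^-1` [set y | hP P a + s <= y]).
  apply/seteqP; split => x /=.
    by move=> H a [al a0]; apply: H.
  by move=> H a al a0; apply: (H a).
apply: closed_bigI => a _; apply: preimage_closed; last exact: closed_ge.
by move=> x _; exact: dotp_cont.
Qed.

Definition ev d (i : 'I_d) : 'rV[R]_d := \row_j ((j == i)%:R).

Lemma ev_lat d (i : 'I_d) : lattice_pt (ev i).
Proof. by move=> j; rewrite mxE; exact: natr_int. Qed.

Lemma ev_neq0 d (i : 'I_d) : ev i != 0.
Proof. by apply/eqP => /rowP/(_ i); rewrite !mxE eqxx => /eqP; rewrite oner_eq0. Qed.

Lemma dotp_ev d (i : 'I_d) x : dotp (ev i) x = x 0 i.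
Proof.
rewrite /dotp (bigD1 i) //= big1 => [|j /negbTE Hj]; rewrite mxE ?Hj ?eqxx.
  by rewrite mul1r addr0.
by rewrite mul0r.
Qed.

Lemma adj_bounds d (P : set 'rV[R]_d) s x i : fine_adjoint P s x ->
  hP P (ev i) + s <= x 0 i /\ x 0 i <= - hP P (- ev i) - s.
Proof.
move=> H; have H1 := H _ (ev_lat i) (ev_neq0 i).
have nz : - ev i != 0 by rewrite oppr_eq0 ev_neq0.
have nl : lattice_pt (- ev i) by move=> j; rewrite mxE; rewrite rpredN; exact: ev_lat.
have H2 := H (- ev i) nl nz.
rewrite dotp_ev in H1; rewrite dotpNl dotp_ev in H2.
split => //; lra.
Qed.

Lemma core_nonempty d (S : seq 'rV[R]_d) : S != [::] -> (0 < d)%N ->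
  fine_core (conv S) !=set0.
Proof.
move=> Sne d0; set P := conv S.
have s0 : (0 < size S)%N by case: (S) Sne.
pose i0 := Ordinal s0.
have PS0 : P S`_0.
  exists (fun i => (i == i0)%:R); split; first by move=> i; case: (_ == _).
  split.
    by rewrite (bigD1 i0) //= big1 ?addr0 // => j /negbTE ->.
  by rewrite (bigD1 i0) //= scale1r big1 ?addr0 // => j /negbTE ->; rewrite scale0r.
have P0 : P `<=` fine_adjoint P 0.
  by move=> x Px a _ _; rewrite addr0; apply: hP_le.
rewrite /fine_core /fine_number.
set E := [set s | 0 < s /\ fine_adjoint P s !=set0].
pose j0 : 'I_d := Ordinal d0.
case: (pselect (E !=set0)) => [Ene | Ee]; last first.
  have -> : E = set0.
    by apply/seteqP; split=> s //= Es; apply: Ee; exists s.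
  by rewrite sup0; exists S`_0; exact: P0.
pose K := [set v : 'rV[R]_d | forall i, `[hP P (ev i), - hP P (- ev i)] (v ord0 i)].
have Kc : compact K.
  by apply: (@rV_compact _ _ (fun i => `[hP P (ev i), - hP P (- ev i)]%classic)) => i; exact: segment_compact.
pose F := filter_from E (fine_adjoint P).
have FF : ProperFilter F.
  apply: filter_from_proper; last by move=> s [].
  apply: filter_from_filter => // s1 s2 E1 E2.
  case: (leP s1 s2) => H; [exists s2 | exists s1] => // x Hx; split => //; apply: adj_mono Hx => //; exact: ltW.
have FK : F K.
  case: Ene => s1 Es1; exists s1 => // x Hx i.
  have [H1 H2] := adj_bounds i Hx.
  case: Es1 => s10 _.
  by rewrite /= in_itv /=; apply/andP; split; lra.
have [p [Kp clp]] := Kc F FF FK.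
have pE : forall s, E s -> fine_adjoint P s p.
  move=> s Es; have := @adj_closed _ P s; rewrite closure_id => ->.
  by move=> B nB; apply: clp => //; exists s.
exists p => a al a0.
rewrite leNgt; apply/negP => H.
have tN : dotp a p - hP P a < sup E by lra.
have [s Es ts] := sup_gt Ene tN.
have := pE s Es a al a0; lra.
Qed.

Lemma lattice_basis d l (a : 'I_l.+1 -> 'rV[R]_d) (lam : 'I_l.+1 -> R) :
  (forall i, lattice_pt (a i)) -> (forall i, 0 < lam i) -> \sum_i lam i *: a i = 0 ->
  exists k, (k <= l)%N /\ exists (B : 'M[R]_(k, d)) (c : 'I_l.+1 -> 'rV[R]_k),
    [/\ (forall j m, B j m \is a Num.int), row_free B, (forall i, lattice_pt (c i)) &
       (forall i, a i = c i *m B)].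
Proof.
move=> alat lam0 lamsum.
pose Aint : 'M[int]_(l.+1, d) := \matrix_(i, j) Num.floor (a i 0 j).
have AintE i j : (Aint i j)%:~R = a i 0 j.
  by rewrite mxE; apply/eqP; rewrite -intrEfloor; exact: alat.
have [L Lu [Rm Rmu [dd _ AE]]] := int_Smith_normal_form Aint.
pose Dm : 'M[int]_(l.+1, d) := \matrix_(i, j) (dd`_i *+ (i == j :> nat)).
pose Lr := map_mx (intr : {rmorphism int -> R}) L.
pose Rr := map_mx (intr : {rmorphism int -> R}) Rm.
pose Dr := map_mx (intr : {rmorphism int -> R}) Dm.
have Rru : Rr \in unitmx by rewrite unitmxE det_map_mx rmorph_unit // -unitmxE.
have Lru : Lr \in unitmx by rewrite unitmxE det_map_mx rmorph_unit // -unitmxE.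
pose J := finset (fun i : 'I_l.+1 => (i < d)%N && (dd`_i != 0)).
pose k := #|J|.
pose sig := fun j : 'I_k => (enum_val j : 'I_l.+1).
have sigJ j : sig j \in J := enum_valP j.
pose B0 : 'M[R]_(k, d) := \matrix_(j, m) Dr (sig j) m.
pose B := B0 *m Rr.
pose c i := \row_j Lr i (sig j).
have rowLD i : row i (Lr *m Dr) = c i *m B0.
  apply/rowP => m; rewrite !mxE.
  rewrite (bigID (fun i' => i' \in J)) /= [X in _ + X]big1 ?addr0; last first.
    move=> i'; rewrite /J inE negb_and => /orP [Hd | /negPn/eqP H0]; rewrite !mxE.
      have -> : (i' == m :> nat) = false.
        by apply/negbTE; apply: contra Hd => /eqP ->; exact: ltn_ord.
      by rewrite mulr0n mulr0.
    by rewrite H0 mul0rn mulr0.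
  rewrite big_enum_val; apply: eq_bigr => j _; rewrite !mxE //.
have Aeq i : a i = c i *m B.
  apply/rowP => m; rewrite /B mulmxA -rowLD -row_mul mxE.
  rewrite /Lr /Dr /Rr -!map_mxM /Dm -AE mxE; exact/esym/AintE.
have Bint j m : B j m \is a Num.int.
  rewrite mxE; apply: rpred_sum => m' _; rewrite !mxE; apply: rpredM; exact: intr_int.
have B0free : row_free B0.
  apply/inj_row_free => v Hv; apply/rowP => j.
  have sjd : (sig j < d)%N by move: (sigJ j); rewrite /J inE => /andP[].
  have := congr1 (fun M : 'M_(1, d) => M 0 (Ordinal sjd)) Hv.
  rewrite !mxE (bigD1 j) //= big1 ?addr0; last first.
    move=> j' Hj'; rewrite !mxE /=.
    have -> : (sig j' == sig j :> nat) = false.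
      apply/negbTE; apply: contra Hj' => /eqP H; apply/eqP; apply: enum_val_inj.
      exact: val_inj.
    by rewrite mulr0n mulr0.
  rewrite !mxE /= eqxx mulr1n => /eqP; rewrite mulf_eq0 intr_eq0.
  have : dd`_(sig j) != 0 by move: (sigJ j); rewrite /J inE => /andP[].
  by move=> /negbTE -> /orP [/eqP ->|].
have Bfree : row_free B by rewrite /row_free /B mxrankMfree ?row_free_unit.
have clat i : lattice_pt (c i) by move=> j; rewrite !mxE; exact: intr_int.
exists k; split; last by exists B, c; split.
have : (k <= l.+1)%N by have := max_card J; rewrite card_ord.
rewrite leq_eqVlt => /orP [/eqP kl|]; last by [].
exfalso.
have JT : J = [set: 'I_l.+1]%SET.
  apply/eqP; rewrite eqEcard finset.subsetT finset.cardsT card_ord. rewrite andTb; have HH : (l < k)%N by rewrite kl.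
  exact: HH.
have csum : \sum_i lam i *: c i = 0.
  apply/eqP; rewrite -(mulmx_free_eq0 _ Bfree) mulmx_suml.
  apply/eqP; rewrite -[X in _ = X]lamsum; apply: eq_bigr => i _; by rewrite -scalemxAl -Aeq.
pose lv := \row_i lam i.
have lvL : lv *m Lr = 0.
  apply/rowP => i'; have Ji' : i' \in J by rewrite JT finset.in_setT.
  have := congr1 (fun M : 'M_(1, k) => M 0 (enum_rank_in Ji' i')) csum.
  rewrite summxE mxE => H; rewrite [RHS]mxE mxE; apply: (etrans _ H).
  apply: eq_bigr => i _; rewrite !mxE.
  by rewrite /sig enum_rankK_in.
have : lv = 0 by rewrite -(mulmxK Lru lv) lvL mul0mx.
move=> /(congr1 (fun M : 'M_(1, l.+1) => M 0 0)); rewrite !mxE => H.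
by move: (lam0 0); rewrite H ltxx.
Qed.

Lemma conv_map d k (S : seq 'rV[R]_d) (B : 'M[R]_(k, d)) :
  conv (map (fun x => x *m B^T) S) = (fun x => x *m B^T) @` conv S.
Proof.
rewrite /conv size_map.
apply/seteqP; split => y.
  move=> [w [w0 [w1 ->]]]; exists (\sum_i w i *: S`_i); first by exists w.
  rewrite mulmx_suml; apply: eq_bigr => i _; by rewrite -scalemxAl (nth_map 0) ?ltn_ord.
move=> [x [w [w0 [w1 ->]]] <-]; exists w; split => //; split => //.
rewrite mulmx_suml; apply: eq_bigr => i _; by rewrite -scalemxAl (nth_map 0) ?ltn_ord.
Qed.

Lemma rV_pos_dim d (v : 'rV[R]_d) : v != 0 -> (0 < d)%N.
Proof. by case: d v => [v|//]; rewrite thinmx0 eqxx. Qed.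

End S.

Theorem mainTheorem2 (R : realType) (d : nat) (P : set 'rV[R]_d)
  (HP : full_dim_lattice_polytope P)
  (l : nat) (a : 'I_l.+1 -> 'rV[R]_d) (lam : 'I_l.+1 -> R)
  (Ha : forall i, fine_core_normal P (a i))
  (Hlam : forall i, 0 < lam i)
  (Hsum : \sum_(i < l.+1) lam i *: a i = 0) :
  exists k : nat, (k <= l)%N /\
    exists Q : set 'rV[R]_k, full_dim_lattice_polytope Q /\
      fine_codegree P = fine_codegree Q.
Proof.
case: HP => S [Sne [Slat [PS Sdim]]]; subst P.
have d0 : (0 < d)%N by case: (Ha 0) => _ [a0 _]; exact: rV_pos_dim a0.
have alat i : lattice_pt (a i) by case: (Ha i).
have [k [kl [B [c [Bint Bfree clat Aeq]]]]] := lattice_basis alat Hlam Hsum.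
have [y Hy] := core_nonempty Sne d0.
pose pi := fun x : 'rV[R]_d => x *m B^T.
have s0 : (0 < size S)%N by case: (S) Sne.
have cBlat c' : lattice_pt c' -> lattice_pt (c' *m B).
  move=> cl j; rewrite mxE; apply: rpred_sum => m _; apply: rpredM; [exact: cl | exact: Bint].
exists k; split => //.
exists (conv (map pi S)); split.
  exists (map pi S); split; first by case: (S) Sne.
  split.
    move=> x /mapP [z zS ->] j; rewrite mxE; apply: rpred_sum => m _; rewrite mxE.
    apply: rpredM; [exact: Slat | exact: Bint].
  split => //.
  rewrite /conv_dim size_map.
  have -> : (\matrix_(i < size S) ((map pi S)`_i - (map pi S)`_0)) =
            (\matrix_(i < size S) (S`_i - S`_0)) *m B^T.
    apply/row_matrixP => i; rewrite row_mul !rowK (nth_map 0) // (nth_map 0) //.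
    by rewrite mulmxBl.
  rewrite -mxrank_tr trmx_mul trmxK mxrankMfree; first exact: (eqP Bfree).
  by rewrite /row_free mxrank_tr; move: Sdim; rewrite /conv_dim => ->.
rewrite /fine_codegree; congr (_^-1).
have hQ c' : hP (conv (map pi S)) c' = hP (conv S) (c' *m B).
  rewrite /hP conv_map; congr inf; apply/seteqP; split => t.
    by move=> [_ [x Sx <-] <-]; exists x => //; rewrite dotp_mulmx.
  by move=> [x Sx <-]; exists (pi x); [exists x | rewrite dotp_mulmx].
have EPQ s y' : fine_adjoint (conv S) s y' -> fine_adjoint (conv (map pi S)) s (pi y').
  move=> Hy' c' cl c0; rewrite hQ dotp_mulmx; apply: Hy'; first exact: cBlat.
  by rewrite mulmx_free_eq0.
have csum : \sum_i lam i *: c i = 0.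
  apply/eqP; rewrite -(mulmx_free_eq0 _ Bfree) mulmx_suml.
  apply/eqP; rewrite -[X in _ = X]Hsum; apply: eq_bigr => i _; by rewrite -scalemxAl -Aeq.
have Lpos : 0 < \sum_i lam i.
  rewrite (bigD1 0) //=; apply: ltr_pwDl => //; apply: sumr_ge0 => i _; exact: ltW.
have EQN s x : fine_adjoint (conv (map pi S)) s x -> s <= fine_number (conv S).
  move=> Hx.
  have H1 : \sum_i lam i * (hP (conv S) (a i) + s) <= 0.
    have H0 : dotp (\sum_i lam i *: c i) x = 0 by rewrite csum dotp0l.
    rewrite dotp_suml in H0; rewrite -[X in _ <= X]H0; apply: ler_sum => i _.
    apply: ler_wpM2l; first exact: ltW.
    rewrite Aeq -hQ; apply: Hx; first exact: clat.
    by apply: contra_neq (Ha i).2.1 => ci0; rewrite Aeq ci0 mul0mx.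
  have H2 : \sum_i lam i * (hP (conv S) (a i) + fine_number (conv S)) = 0.
    have H0 : dotp (\sum_i lam i *: a i) y = 0 by rewrite Hsum dotp0l.
    rewrite dotp_suml in H0; rewrite -[RHS]H0; apply: eq_bigr => i _.
    by rewrite ((Ha i).2.2 y Hy).
  have spl t : \sum_i lam i * (hP (conv S) (a i) + t) =
      \sum_i lam i * hP (conv S) (a i) + t * \sum_i lam i.
    by rewrite mulr_sumr -big_split; apply: eq_bigr => i _; rewrite mulrDr [t * _]mulrC.
  rewrite spl in H1; rewrite spl in H2; nra.
rewrite /fine_number.
set EP := [set s | 0 < s /\ fine_adjoint (conv S) s !=set0].
set EQ := [set s | 0 < s /\ fine_adjoint (conv (map pi S)) s !=set0].
have EQN' s : EQ s -> s <= sup EP by move=> [_ [x Hx]]; exact: EQN Hx.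
have EPQ' s : EP s -> EQ s by move=> [s0' [x Hx]]; split => //; exists (pi x); exact: EPQ.
case: (pselect (EP !=set0)) => [EPne | EPe].
  have EQne : EQ !=set0 by case: EPne => s /EPQ' Hs; exists s.
  apply/eqP; rewrite eq_le; apply/andP; split; last exact: ge_sup EQne EQN'.
  rewrite leNgt; apply/negP => H.
  have [s Es Hs] := sup_gt EPne H.
  have := ub_le_sup (ex_intro _ (sup EP) EQN') (EPQ' _ Es).
  rewrite leNgt Hs //.
have EP0 : EP = set0 by apply/seteqP; split => s //= Es; apply: EPe; exists s.
rewrite EP0 sup0 in EQN' *.
have -> : EQ = set0.
  by apply/seteqP; split => s //= Es; have := EQN' s Es; case: Es => Hs _; rewrite leNgt Hs.
by rewrite sup0.
Qed.
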